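(* Consider the setting described in the context. If $Q_{t,k}\ge0$, $R_{t,k}>0$ and $G_t\ge0$ for all $k\in\mathbb{T}_t$, $t\in\mathbb{T}$, then Problem (LQ) admits a unique linear feedback equilibrium strategy $\Phi$.
   Context: Let $N$ be a positive integer, $\mathbb{T}=\{0,1,\dots,N-1\}$, $\mathbb{T}_t=\{t,\dots,N-1\}$. On a probability space $(\Omega,\mathcal{F},P)$, $\{w_k\}$ is a scalar martingale difference sequence with $\mathbb{E}[w_{k+1}\mid\mathcal{F}_k]=0$ and $\mathbb{E}[w_{k+1}^2\mid\mathcal{F}_k]=1$ for $k\ge0$, where $\mathcal{F}_k=\sigma\{x_0,w_l,\ l=0,\dots,k\}$ and $\mathcal{F}_{-1}=\{\emptyset,\Omega\}$. $L^2_{\mathcal{F}}(\mathbb{T}_t;\mathbb{R}^m)$ is the set of $\mathbb{R}^m$-valued processes $\{\nu_k,k\in\mathbb{T}_t\}$ with each $\nu_k$ $\mathcal{F}_{k-1}$-measurable and $\sum_k\mathbb{E}|\nu_k|^2<\infty$; $L^2_{\mathcal{F}}(k;\mathcal{H})$ is the set of square-integrable $\mathcal{F}_{k-1}$-measurable $\mathcal{H}$-valued random variables. For each $t\in\mathbb{T}$, $k\in\mathbb{T}_t$, let $A_{t,k},C_{t,k}\in\mathbb{R}^{n\times n}$, $B_{t,k},D_{t,k}\in\mathbb{R}^{n\times m}$ be deterministic and $Q_{t,k}\in\mathbb{R}^{n\times n}$, $R_{t,k}\in\mathbb{R}^{m\times m}$, $G_t\in\mathbb{R}^{n\times n}$ deterministic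 symmetric. For $t\in\mathbb{T}$, $y\in L^2_{\mathcal{F}}(t;\mathbb{R}^n)$, $u\in L^2_{\mathcal{F}}(\mathbb{T}_t;\mathbb{R}^m)$, the state $X^t$ solves $X^t_{k+1}=A_{t,k}X^t_k+B_{t,k}u_k+(C_{t,k}X^t_k+D_{t,k}u_k)w_k$, $X^t_t=y$, and $J(t,y;u)=\sum_{k=t}^{N-1}\mathbb{E}[(X^t_k)^TQ_{t,k}X^t_k+u_k^TR_{t,k}u_k]+\mathbb{E}[(X^t_N)^TG_tX^t_N]$ (Problem (LQ) is to minimize it). $\Phi=\{\Phi_0,\dots,\Phi_{N-1}\}$, $\Phi_t\in\mathbb{R}^{m\times n}$, is a linear feedback equilibrium strategy of Problem (LQ) if for every $(t,x)\in\mathbb{T}\times\mathbb{R}^n$, $k\in\mathbb{T}_t$ and $u_k\in L^2_{\mathcal{F}}(k;\mathbb{R}^m)$, $$J\big(k,X^{t,x,*}_k;(\Phi_\ell X^{k,\Phi}_\ell)_{\ell\in\mathbb{T}_k}\big)\le J\big(k,X^{t,x,*}_k;(u_k,(\Phi_\ell X^{k,u_k,\Phi}_\ell)_{\ell\in\mathbb{T}_{k+1}})\big),$$ where $X^{t,x,*}_{k+1}=(A_{k,k}+B_{k,k}\Phi_k)X^{t,x,*}_k+(C_{k,k}+D_{k,k}\Phi_k)X^{t,x,*}_kw_k$, $X^{t,x,*}_t=x$; $X^{k,\Phi}_{\ell+1}=(A_{k,\ell}+B_{k,\ell}\Phi_\ell)X^{k,\Phi}_\ell+(C_{k,\ell}+D_{k,\ell}\Phi_\ell)X^{k,\Phi}_\ell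 w_\ell$ ($\ell\in\mathbb{T}_k$), $X^{k,\Phi}_k=X^{t,x,*}_k$; and $X^{k,u_k,\Phi}_k=X^{t,x,*}_k$, $X^{k,u_k,\Phi}_{k+1}=A_{k,k}X^{k,u_k,\Phi}_k+B_{k,k}u_k+(C_{k,k}X^{k,u_k,\Phi}_k+D_{k,k}u_k)w_k$, $X^{k,u_k,\Phi}_{\ell+1}=(A_{k,\ell}+B_{k,\ell}\Phi_\ell)X^{k,u_k,\Phi}_\ell+(C_{k,\ell}+D_{k,\ell}\Phi_\ell)X^{k,u_k,\Phi}_\ell w_\ell$ for $\ell\in\mathbb{T}_{k+1}$. *)

(* Defs.v *)
From HB Require Import structures.
From mathcomp Require Import all_boot all_order all_algebra.
From mathcomp Require Import all_classical all_reals all_analysis.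

Set Implicit Arguments.
Unset Strict Implicit.
Unset Printing Implicit Defensive.

Import Order.TTheory GRing.Theory Num.Theory.
Local Open Scope classical_set_scope.
Local Open Scope ring_scope.

Section LQDefs.
Context {d : measure_display} {T : measurableType d} {R : realType}.

Definition qf (p : nat) (M : 'M[R]_p) (v : 'cV[R]_p) : R := (v^T *m M *m v) 0 0.

Definition psd (p : nat) (M : 'M[R]_p) : Prop :=
  M^T = M /\ forall v : 'cV[R]_p, 0 <= qf M v.
Definition pd (p : nat) (M : 'M[R]_p) : Prop :=
  M^T = M /\ forall v : 'cV[R]_p, v != 0 -> 0 < qf M v.

(** Generators of F_{k-1} = sigma{x_0, w_l, l = 0..k-1}; F_{-1} = {emptyset, Omega}. *)
Definition gen_prev (n : nat) (x0 : T -> 'cV[R]_n) (w : nat -> T -> R) (k : nat)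
  : set (set T) :=
  [set A | (exists (i : 'I_n) (B : set R),
              [/\ (0 < k)%N, measurable B & A = (fun o => x0 o i 0) @^-1` B])
        \/ (exists (l : nat) (B : set R),
              [/\ (l < k)%N, measurable B & A = w l @^-1` B])].

Definition Fprev (n : nat) (x0 : T -> 'cV[R]_n) (w : nat -> T -> R) (k : nat)
  : set (set T) := <<s gen_prev x0 w k >>.

Definition Fmeas (n : nat) (x0 : T -> 'cV[R]_n) (w : nat -> T -> R) (k : nat)
  (Z : T -> R) : Prop :=
  forall B : set R, measurable B -> Fprev x0 w k (Z @^-1` B).
Definition Fmeas_vec (n p : nat) (x0 : T -> 'cV[R]_n) (w : nat -> T -> R) (k : nat)
  (Z : T -> 'cV[R]_p) : Prop :=
  forall i : 'I_p, Fmeas x0 w k (fun o => Z o i 0).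

Definition L2vec (P : probability T R) (p : nat) (Z : T -> 'cV[R]_p) : Prop :=
  forall i : 'I_p, P.-integrable setT (fun o => ((Z o i 0) ^+ 2)%:E).

Definition L2F_k (P : probability T R) (n m : nat) (x0 : T -> 'cV[R]_n)
  (w : nat -> T -> R) (k : nat) (u : T -> 'cV[R]_m) : Prop :=
  Fmeas_vec x0 w k u /\ L2vec P u.

(** {w_k} martingale difference sequence: E[w_k | F_{k-1}] = 0 and
    E[w_k^2 | F_{k-1}] = 1 for all k >= 0 (conditional expectations
    expressed through their defining property on the sets of F_{k-1}). *)
Definition mds (P : probability T R) (n : nat) (x0 : T -> 'cV[R]_n)
  (w : nat -> T -> R) : Prop :=
  forall k : nat,
  [/\ measurable_fun setT (w k),
      P.-integrable setT (fun o => (w k o)%:E),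
      (forall A, Fprev x0 w k A -> (\int[P]_(o in A) (w k o)%:E = 0)%E),
      P.-integrable setT (fun o => ((w k o) ^+ 2)%:E)
    & (forall A, Fprev x0 w k A -> (\int[P]_(o in A) ((w k o) ^+ 2)%:E = P A)%E)].

(** State recursion started at time s from y, with coefficients
    Ac l, Bc l, Cc l, Dc l at time l and control u_l = c l X_l omega.
    [path ... j] is X_{s+j}. *)
Fixpoint path (n m : nat) (Ac Cc : nat -> 'M[R]_n) (Bc Dc : nat -> 'M[R]_(n, m))
  (w : nat -> T -> R) (s : nat) (y : T -> 'cV[R]_n)
  (c : nat -> 'cV[R]_n -> T -> 'cV[R]_m) (j : nat) : T -> 'cV[R]_n :=
  match j with
  | 0 => y
  | j'.+1 => fun o =>
      let x := path Ac Cc Bc Dc w s y c j' o in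
      let l := (s + j')%N in
      let u := c l x o in
      Ac l *m x + Bc l *m u + w l o *: (Cc l *m x + Dc l *m u)
  end.

Definition Jcost (P : probability T R) (n m N : nat)
  (A C : nat -> nat -> 'M[R]_n) (B D : nat -> nat -> 'M[R]_(n, m))
  (Q : nat -> nat -> 'M[R]_n) (Rm : nat -> nat -> 'M[R]_m) (G : nat -> 'M[R]_n)
  (w : nat -> T -> R) (s : nat) (y : T -> 'cV[R]_n)
  (c : nat -> 'cV[R]_n -> T -> 'cV[R]_m) : \bar R :=
  let X := path (A s) (C s) (B s) (D s) w s y c in
  ((\sum_(j < N - s)
      \int[P]_o ((qf (Q s (s + j)%N) (X j o)
                 + qf (Rm s (s + j)%N) (c (s + j)%N (X j o) o))%:E))
   + \int[P]_o (qf (G s) (X (N - s)%N o))%:E)%E.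

Definition equilibrium (P : probability T R) (n m N : nat) (x0 : T -> 'cV[R]_n)
  (w : nat -> T -> R)
  (A C : nat -> nat -> 'M[R]_n) (B D : nat -> nat -> 'M[R]_(n, m))
  (Q : nat -> nat -> 'M[R]_n) (Rm : nat -> nat -> 'M[R]_m) (G : nat -> 'M[R]_n)
  (Phi : nat -> 'M[R]_(m, n)) : Prop :=
  forall (t : nat) (x : 'cV[R]_n), (t < N)%N ->
  forall k : nat, (t <= k < N)%N ->
  forall u : T -> 'cV[R]_m, L2F_k P x0 w k u ->
  let Xstar := path (fun l => A l l) (fun l => C l l) (fun l => B l l)
                    (fun l => D l l) w t (fun _ => x)
                    (fun l z _ => Phi l *m z) (k - t)%N in
  (Jcost P N A C B D Q Rm G w k Xstar (fun l z _ => Phi l *m z)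
   <= Jcost P N A C B D Q Rm G w k Xstar
        (fun l z o => if l == k then u o else Phi l *m z))%E.

End LQDefs.

(* Main.v *)
Require Import Defs.
From HB Require Import structures.
From mathcomp Require Import all_boot all_order all_algebra.
From mathcomp Require Import all_classical all_reals all_analysis.
From mathcomp Require Import measurable_realfun lra ring zify.
From Stdlib Require Import Lia.
Import Order.TTheory GRing.Theory Num.Theory.
Set Implicit Arguments.
Unset Strict Implicit.
Unset Printing Implicit Defensive.
Local Open Scope classical_set_scope.
Local Open Scope ring_scope.
Section LA.
Context {R : realType}.

Definition bf (p : nat) (M : 'M[R]_p) (a b : 'cV[R]_p) : R := (a^T *m M *m b) 0 0.

Lemma addE p q (A B : 'M[R]_(p, q)) i j : (A + B) i j = A i j + B i j.
Proof. by rewrite [LHS]mxE. Qed.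

Lemma qfE p (M : 'M[R]_p) v : qf M v = (v^T *m M *m v) 0 0.
Proof. by []. Qed.

Lemma qf_addM p (M1 M2 : 'M[R]_p) v : qf (M1 + M2) v = qf M1 v + qf M2 v.
Proof. by rewrite !qfE mulmxDr mulmxDl mxE. Qed.

Lemma qf_conj p q (K : 'M[R]_(p, q)) (M : 'M[R]_p) v :
  qf (K^T *m M *m K) v = qf M (K *m v).
Proof. by rewrite !qfE trmx_mul !mulmxA. Qed.

Lemma bfE p (M : 'M[R]_p) a b : bf M a b = ((M^T *m a)^T *m b) 0 0.
Proof. by rewrite /bf trmx_mul trmxK. Qed.

Lemma trmx11 (X : 'M[R]_1) : X^T 0 0 = X 0 0.
Proof. by rewrite mxE. Qed.

Lemma tr11 (X : 'M[R]_1) : X^T = X.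
Proof. by apply/matrixP => i j; rewrite !ord1 mxE. Qed.

Lemma qf_add_sym p (M : 'M[R]_p) a b : M^T = M ->
  qf M (a + b) = qf M a + qf M b + 2 * bf M a b.
Proof.
move=> sM; rewrite !qfE /bf mulmxDr [(a + b)^T]linearD /= !mulmxDl.
have -> : (b^T *m M *m a) = (a^T *m M *m b).
  by rewrite -[LHS]tr11 !trmx_mul trmxK sM mulmxA.
rewrite !mxE; lra.
Qed.

Lemma qf_scale p (M : 'M[R]_p) c a : qf M (c *: a) = c ^+ 2 * qf M a.
Proof. by rewrite !qfE [(c *: a)^T]linearZ /= -!scalemxAl -scalemxAr !mxE mulrA -expr2. Qed.

Lemma bf_scaler p (M : 'M[R]_p) c a b : bf M a (c *: b) = c * bf M a b.
Proof. by rewrite /bf -scalemxAr mxE. Qed.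

Lemma qf_ge0 p (M : 'M[R]_p) v : psd M -> 0 <= qf M v.
Proof. by case. Qed.

Lemma psd_add p (M1 M2 : 'M[R]_p) : psd M1 -> psd M2 -> psd (M1 + M2).
Proof.
move=> [s1 h1] [s2 h2]; split; first by rewrite linearD /= s1 s2.
by move=> v; rewrite qf_addM addr_ge0.
Qed.

Lemma psd_conj p q (K : 'M[R]_(p, q)) (M : 'M[R]_p) : psd M -> psd (K^T *m M *m K).
Proof.
move=> [s h]; split; first by rewrite !trmx_mul trmxK s mulmxA.
by move=> v; rewrite qf_conj.
Qed.

Lemma pd_psd p (M : 'M[R]_p) : pd M -> psd M.
Proof.
move=> [s h]; split => // v; have [->|v0] := eqVneq v 0.
  by rewrite qfE mulmx0 mxE.
exact/ltW/h.
Qed.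

Lemma pd_add_psd p (M1 M2 : 'M[R]_p) : pd M1 -> psd M2 -> pd (M1 + M2).
Proof.
move=> [s1 h1] [s2 h2]; split; first by rewrite linearD /= s1 s2.
by move=> v v0; rewrite qf_addM; have := h1 v v0; have := h2 v; lra.
Qed.

Lemma pd_unit p (M : 'M[R]_p) : pd M -> M \in unitmx.
Proof.
move=> [s h]; rewrite -row_free_unit -kermx_eq0; apply/eqP/row_matrixP => i.
rewrite row0; apply/eqP/negPn/negP => ri0.
have hr : row i (kermx M) *m M = 0.
  by rewrite -row_mul mulmx_ker row0.
have := h (row i (kermx M))^T.
rewrite (_ : _^T != 0); last by rewrite -trmx0 (inj_eq (@trmx_inj _ _ _)).
move/(_ isT); rewrite qfE trmxK hr mul0mx mxE ltxx //.
Qed.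


Section CS.
Context (n m : nat) (Q : 'M[R]_n) (Rr : 'M[R]_m) (V : 'M[R]_n) (A C : 'M[R]_n)
  (B D : 'M[R]_(n, m)).

Definition fc y v := qf Q y + qf Rr v + qf V (A *m y + B *m v) + qf V (C *m y + D *m v).
Definition Hm := Rr + B^T *m V *m B + D^T *m V *m D.
Definition Km := B^T *m V *m A + D^T *m V *m C.

Lemma bf_mul p q (M : 'M[R]_p) (K : 'M[R]_(p, q)) a e :
  bf M a (K *m e) = ((K^T *m M^T *m a)^T *m e) 0 0.
Proof. by rewrite bfE !trmx_mul !trmxK !mulmxA. Qed.

Lemma lin_entry p (a b e : 'cV[R]_p) :
  (a^T *m e) 0 0 + (b^T *m e) 0 0 = ((a + b)^T *m e) 0 0.
Proof. by rewrite [(a + b)^T]linearD /= mulmxDl addE. Qed.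

Lemma complete_sq0 (F : 'M[R]_(m, n)) y e : Rr^T = Rr -> V^T = V ->
  Hm *m F = - Km -> fc y (F *m y + e) = fc y (F *m y) + qf Hm e.
Proof.
move=> sR sV HF.
set z := F *m y.
rewrite /fc !mulmxDr !addrA (qf_add_sym z e sR)
  (qf_add_sym (A *m y + B *m z) (B *m e) sV)
  (qf_add_sym (C *m y + D *m z) (D *m e) sV).
rewrite /Hm !qf_addM !qf_conj.
have cross : bf Rr z e + bf V (A *m y + B *m z) (B *m e)
    + bf V (C *m y + D *m z) (D *m e) = 0.
  rewrite bfE !bf_mul sR sV !lin_entry.
  have -> : Rr *m z + B^T *m V *m (A *m y + B *m z) + D^T *m V *m (C *m y + D *m z)
      = Hm *m z + Km *m y.
    rewrite /Hm /Km !mulmxDr !mulmxDl !mulmxA.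
    by apply/matrixP => i j; rewrite !addE; lra.
  by rewrite /z mulmxA HF mulNmx addNr trmx0 mul0mx mxE.
lra.
Qed.

Lemma complete_sq (F : 'M[R]_(m, n)) y v : Rr^T = Rr -> V^T = V ->
  Hm *m F = - Km -> fc y v = fc y (F *m y) + qf Hm (v - F *m y).
Proof.
move=> sR sV HF; rewrite -complete_sq0 //; congr fc.
by rewrite addrC subrK.
Qed.
End CS.
End LA.
Section Key.
Context {d : measure_display} {T : measurableType d} {R : realType}
  (mu : {measure set T -> \bar R}).
Context (G : set (set T)) (sub : forall A, <<s G>> A -> measurable A).
Local Notation TG := (g_sigma_algebraType G).

Lemma mtrans (h : T -> R) : @measurable_fun _ _ TG R setT h -> measurable_fun setT h.
Proof.
move=> mh _ B mB; rewrite setTI; apply: sub.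
by have := mh measurableT B mB; rewrite setTI.
Qed.

Import HBNNSimple.

Lemma key_sfun (f : T -> R) (mf : measurable_fun setT f) (f0 : forall x, 0 <= f x)
  (s : {nnsfun TG >-> R}) :
  (\int[mu]_x ((s x) * f x)%:E =
   \sum_(y \in range s) (y%:E * \int[mu]_(x in (s @^-1` [set y])) (f x)%:E))%E.
Proof.
have mS y : measurable ((s : TG -> R) @^-1` [set y] : set T).
  by apply: sub; exact: (measurable_sfunP s (measurable_set1 y)).
have ms : measurable_fun setT (s : T -> R).
  by apply: mtrans; exact: measurable_funP.
transitivity (\int[mu]_x (\sum_(y \in range s) (y * \1_(s @^-1` [set y]) x * f x)%:E))%E.
  apply: eq_integral => x _; rewrite fsumEFin //; congr EFin.
  by rewrite {1}fimfunE mulr_fsuml.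
rewrite ge0_integral_fsum //; last 2 first.
- move=> y; apply/measurable_EFinP; apply: measurable_funM => //.
  apply: measurable_funM => //; exact: measurable_indic.
- move=> y x _; rewrite lee_fin; apply: mulr_ge0 => //.
  rewrite /indic; case E: (_ \in _); rewrite ?mulr0 ?mulr1 //.
  by move: E => /set_mem /= <-.
apply: eq_fsbigr => y yr.
have y0 : 0 <= y by move: yr; rewrite inE => -[t _ <-].
under eq_integral do rewrite -mulrA EFinM.
rewrite ge0_integralZl //; last 2 first.
- apply/measurable_EFinP; apply: measurable_funM => //; exact: measurable_indic.
- by move=> x _; rewrite lee_fin mulr_ge0.
congr (_ * _)%E.
rewrite [RHS]integral_mkcond; apply: eq_integral => x _.
rewrite /patch /indic /=; case: (x \in _) => /=; rewrite ?mul1r ?mul0r //.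
Qed.

Lemma key (f1 f2 : T -> R) : measurable_fun setT f1 -> measurable_fun setT f2 ->
  (forall x, 0 <= f1 x) -> (forall x, 0 <= f2 x) ->
  (forall A, <<s G>> A ->
     (\int[mu]_(x in A) (f1 x)%:E = \int[mu]_(x in A) (f2 x)%:E)%E) ->
  forall h : T -> R, (forall x, 0 <= h x) -> @measurable_fun _ _ TG R setT h ->
  (\int[mu]_x (h x * f1 x)%:E = \int[mu]_x (h x * f2 x)%:E)%E.
Proof.
move=> mf1 mf2 f10 f20 hA h h0 mh.
have mEh : @measurable_fun _ _ TG (\bar R) setT (EFin \o h).
  exact/measurable_EFinP.
pose sn := nnsfun_approx (measurableT : measurable (setT : set TG)) mEh.
have lim1 (f : T -> R) (mf : measurable_fun setT f) (f0 : forall x, 0 <= f x) :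
    (\int[mu]_x (h x * f x)%:E = limn (fun n => \int[mu]_x ((sn n x) * f x)%:E))%E.
  rewrite -monotone_convergence //; last 3 first.
  - move=> n; apply/measurable_EFinP; apply: measurable_funM => //.
    by apply: mtrans; exact: measurable_funP.
  - by move=> n x _; rewrite lee_fin mulr_ge0.
  - move=> x _ a b ab; rewrite lee_fin ler_wpM2r //.
    by have /lefP := nd_nnsfun_approx (measurableT : measurable (setT : set TG)) mEh ab; apply.
  apply: eq_integral => x _; apply/esym/cvg_lim => //.
  rewrite EFinM; under eq_fun do rewrite EFinM.
  apply: cvgeZr => //.
  have H0 : forall x : TG, setT x -> (0 <= (EFin \o h) x)%E by move=> ? _; rewrite /= lee_fin.
  exact: (@cvg_nnsfun_approx _ TG R [set: TG] measurableT (EFin \o h) mEh H0 x Logic.I).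
rewrite (lim1 f1) // (lim1 f2) //; congr (lim (_ @ \oo)); apply/funext => n.
rewrite !key_sfun //; apply: eq_fsbigr => y _; rewrite hA //.
exact: (measurable_sfunP (sn n) (measurable_set1 y)).
Qed.

Lemma keyS (f1 f2 : T -> R) : measurable_fun setT f1 -> measurable_fun setT f2 ->
  (forall x, 0 <= f1 x) -> (forall x, 0 <= f2 x) ->
  (forall A, <<s G>> A ->
     (\int[mu]_(x in A) (f1 x)%:E = \int[mu]_(x in A) (f2 x)%:E)%E) ->
  forall g : T -> R, @measurable_fun _ _ TG R setT g ->
  mu.-integrable setT (fun x => (g x * f1 x)%:E) ->
  mu.-integrable setT (fun x => (g x * f2 x)%:E) ->
  (\int[mu]_x (g x * f1 x)%:E = \int[mu]_x (g x * f2 x)%:E)%E.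
Proof.
move=> mf1 mf2 f10 f20 hA g mg i1 i2.
pose gp x := Num.max (g x) 0; pose gn x := Num.max (- g x) 0.
have mgp : @measurable_fun _ _ TG R setT gp.
  by apply: measurable_maxr => //; exact: measurable_cst.
have mgn : @measurable_fun _ _ TG R setT gn.
  apply: measurable_maxr; last exact: measurable_cst.
  exact: measurable_funN.
have gp0 x : 0 <= gp x by rewrite /gp le_max lexx orbT.
have gn0 x : 0 <= gn x by rewrite /gn le_max lexx orbT.
have dec (f : T -> R) : measurable_fun setT f -> (forall x, 0 <= f x) ->
    mu.-integrable setT (fun x => (g x * f x)%:E) ->
    (\int[mu]_x (g x * f x)%:E =
     \int[mu]_x (gp x * f x)%:E - \int[mu]_x (gn x * f x)%:E)%E.
  move=> mf f0 i.
  have ip : mu.-integrable setT (fun x => (gp x * f x)%:E).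
    apply: le_integrable i => //.
      by apply/measurable_EFinP; apply: measurable_funM => //; exact: mtrans.
    move=> x _; rewrite !abse_EFin lee_fin !normrM ler_wpM2r //.
    by rewrite /gp maxEle; case: ifP; rewrite ?normr0 ?normr_ge0.
  have inn : mu.-integrable setT (fun x => (gn x * f x)%:E).
    apply: le_integrable i => //.
      by apply/measurable_EFinP; apply: measurable_funM => //; exact: mtrans.
    move=> x _; rewrite !abse_EFin lee_fin !normrM ler_wpM2r //.
    by rewrite /gn maxEle; case: ifP; rewrite ?normr0 ?normrN.
  rewrite -integralB //; apply: eq_integral => x _.
  rewrite -EFinB -mulrBl /gp /gn !maxEle; congr EFin; congr (_ * _).
  by case: ifP; case: ifP => h1 h2; lra.
rewrite (dec f1) // (dec f2) //.
by rewrite (@key f1 f2) // (@key f1 f2 mf1 mf2 f10 f20 hA gn).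
Qed.
End Key.

Section Main.
Context {d : measure_display} {T : measurableType d} {R : realType}
  (P : probability T R) (n : nat) (x0 : T -> 'cV[R]_n) (w : nat -> T -> R).
Context (hx0 : forall i : 'I_n, measurable_fun setT (fun o => x0 o i 0))
  (hw : mds P x0 w).

Local Notation TG k := (g_sigma_algebraType (gen_prev x0 w k)).
Definition FM k (f : T -> R) := @measurable_fun _ _ (TG k) R setT f.

Lemma subF k A : Fprev x0 w k A -> measurable A.
Proof.
rewrite /Fprev; apply: smallest_sub; first exact: sigma_algebra_measurable.
move=> B [[i [B' [_ mB' ->]]]|[l [B' [_ mB' ->]]]].
- by have := hx0 i measurableT mB'; rewrite setTI.
- by have [mw _ _ _ _] := hw l; have := mw measurableT B' mB'; rewrite setTI.
Qed.

Lemma FM_T k f : FM k f -> measurable_fun setT f.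
Proof. exact: (mtrans (@subF k)). Qed.

Lemma FmeasE k f : Fmeas x0 w k f -> FM k f.
Proof. by move=> h _ B mB; rewrite setTI; exact: h. Qed.

Lemma FM_mono k k' f : (k <= k')%N -> FM k f -> FM k' f.
Proof.
move=> kk' mf _ B mB; have := mf measurableT B mB; rewrite !setTI.
apply: sub_sigma_algebra2.
move=> A [[i [B' [k0 mB' ->]]]|[l [B' [lk mB' ->]]]].
- by left; exists i, B'; split => //; exact: leq_trans kk'.
- by right; exists l, B'; split => //; exact: leq_trans kk'.
Qed.

Lemma FM_w k l : (l < k)%N -> FM k (w l).
Proof.
move=> lk _ B mB; rewrite setTI; apply: sub_sigma_algebra; right.
by exists l, B.
Qed.

Lemma FM_cst k c : FM k (fun _ => c).
Proof. exact: (@measurable_cst _ _ (TG k) R setT c). Qed.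

Lemma E1 l h : FM l h -> (forall x, 0 <= h x) ->
  (\int[P]_x (h x * w l x ^+ 2)%:E = \int[P]_x (h x)%:E)%E.
Proof.
move=> mh h0; have [mw iw _ iw2 w2] := hw l.
have hA : forall A, <<s gen_prev x0 w l>> A ->
    (\int[P]_(x in A) (w l x ^+ 2)%:E = \int[P]_(x in A) (1)%:E)%E.
  move=> A hA; rewrite w2 //.
  have := integral_cst P (subF hA) 1%E; rewrite mul1e => <-.
  by apply: eq_integral.
have mw2 : measurable_fun setT (fun x => w l x ^+ 2) by exact: measurable_funX.
have := @key _ _ _ P (gen_prev x0 w l) (@subF l) (fun x => w l x ^+ 2) (fun _ => 1)
  mw2 (measurable_cst _) (fun x => sqr_ge0 _) (fun _ => ler01) hA h h0 mh.
move=> ->; by apply: eq_integral => x _; rewrite mulr1.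
Qed.

Lemma fin_sub_eq0 (a b : \bar R) : a \is a fin_num -> b \is a fin_num ->
  (a - b)%E = 0%E -> a = b.
Proof.
by move: a b => [a| |] [b| |] // _ _ /eqP; rewrite -EFinB eqe subr_eq0 => /eqP ->.
Qed.

Lemma E2 l g : FM l g -> P.-integrable setT (fun x => (g x * w l x)%:E) ->
  (\int[P]_x (g x * w l x)%:E = 0)%E.
Proof.
move=> mg ig; have [mw iw w0 iw2 w2] := hw l.
pose wp x := Num.max (w l x) 0; pose wn x := Num.max (- w l x) 0.
have mwp : measurable_fun setT wp.
  by apply: measurable_maxr => //; exact: measurable_cst.
have mwn : measurable_fun setT wn.
  apply: measurable_maxr; last exact: measurable_cst.
  exact: measurable_funN.
have wp0 x : 0 <= wp x by rewrite /wp le_max lexx orbT.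
have wn0 x : 0 <= wn x by rewrite /wn le_max lexx orbT.
have wpn x : wp x - wn x = w l x.
  by rewrite /wp /wn !maxEle; case: ifP; case: ifP => h1 h2; lra.
have bp x : `|wp x| <= `|w l x|.
  by rewrite /wp maxEle; case: ifP; rewrite ?normr0 ?normr_ge0.
have bn x : `|wn x| <= `|w l x|.
  by rewrite /wn maxEle; case: ifP; rewrite ?normr0 ?normrN.
have mgT := FM_T mg.
have igp : P.-integrable setT (fun x => (g x * wp x)%:E).
  apply: le_integrable ig => //.
    by apply/measurable_EFinP; apply: measurable_funM.
  by move=> x _; rewrite !abse_EFin lee_fin !normrM ler_wpM2l.
have ign : P.-integrable setT (fun x => (g x * wn x)%:E).
  apply: le_integrable ig => //.
    by apply/measurable_EFinP; apply: measurable_funM.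
  by move=> x _; rewrite !abse_EFin lee_fin !normrM ler_wpM2l.
have hA : forall A, <<s gen_prev x0 w l>> A ->
    (\int[P]_(x in A) (wp x)%:E = \int[P]_(x in A) (wn x)%:E)%E.
  move=> A hA; have mA := subF hA.
  have iwA : P.-integrable A (fun x => (w l x)%:E).
    exact: integrableS iw.
  have ipA : P.-integrable A (fun x => (wp x)%:E).
    apply: le_integrable iwA => //.
      by apply/measurable_EFinP; exact: measurable_funS mwp.
    by move=> x _; rewrite !abse_EFin lee_fin.
  have inA : P.-integrable A (fun x => (wn x)%:E).
    apply: le_integrable iwA => //.
      by apply/measurable_EFinP; exact: measurable_funS mwn.
    by move=> x _; rewrite !abse_EFin lee_fin.
  apply: fin_sub_eq0; [exact: integrable_fin_num|exact: integrable_fin_num|].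
  rewrite -integralB // -(w0 A hA); apply: eq_integral => x _.
  by rewrite -EFinB wpn.
have := @keyS _ _ _ P (gen_prev x0 w l) (@subF l) wp wn mwp mwn wp0 wn0 hA g mg igp ign.
move=> E.
rewrite (_ : (\int[P]_x (g x * w l x)%:E =
   \int[P]_x (g x * wp x)%:E - \int[P]_x (g x * wn x)%:E)%E).
  by rewrite E subee //; exact: integrable_fin_num.
rewrite -integralB //; apply: eq_integral => x _.
by rewrite -EFinB -mulrBr wpn.
Qed.

Lemma eqint (f g : T -> \bar R) : P.-integrable setT f -> (forall x, f x = g x) ->
  P.-integrable setT g.
Proof. by move=> i e; apply: (eq_integrable measurableT f) => // x _; exact: e. Qed.

Lemma eqmeas (f g : T -> R) : measurable_fun setT f -> (forall x, f x = g x) ->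
  measurable_fun setT g.
Proof. by move=> i e; apply: (eq_measurable_fun f) => // x _; exact: e. Qed.

Definition L2m (f : T -> R) :=
  measurable_fun setT f /\ P.-integrable setT (fun o => (f o ^+ 2)%:E).

Lemma int_cst c : P.-integrable setT (fun _ => c%:E).
Proof. exact: (finite_measure_integrable_cst P c measurableT). Qed.

Lemma L2m_cst c : L2m (fun _ => c).
Proof. by split; [exact: measurable_cst | exact: int_cst]. Qed.

Lemma int_scale c f : P.-integrable setT (fun o => (f o)%:E) ->
  P.-integrable setT (fun o => (c * f o)%:E).
Proof.
move=> i; apply: (eqint (integrableZl measurableT c i)) => x.
by rewrite EFinM.
Qed.

Lemma int_add f g : P.-integrable setT (fun o => (f o)%:E) ->
  P.-integrable setT (fun o => (g o)%:E) ->
  P.-integrable setT (fun o => (f o + g o)%:E).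
Proof.
move=> i1 i2; apply: (eqint (integrableD measurableT i1 i2)) => x.
by rewrite EFinD.
Qed.

Lemma int_sum I (s : seq I) (F : I -> T -> R) :
  (forall i, P.-integrable setT (fun o => (F i o)%:E)) ->
  P.-integrable setT (fun o => (\sum_(i <- s) F i o)%:E).
Proof.
move=> h; elim: s => [|a s IH].
  by apply: (eqint (int_cst 0)) => x; rewrite big_nil.
apply: (eqint (int_add (h a) IH)) => x.
by rewrite big_cons.
Qed.

Lemma L2m_add f g : L2m f -> L2m g -> L2m (fun o => f o + g o).
Proof.
move=> [mf if2] [mg ig2]; split; first exact: measurable_funD.
apply: le_integrable (int_add (int_scale 2 if2) (int_scale 2 ig2)) => //.
  by apply/measurable_EFinP; apply: measurable_funX; exact: measurable_funD.
move=> x _; rewrite !abse_EFin lee_fin.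
rewrite ger0_norm ?sqr_ge0 // ger0_norm; last by rewrite addr_ge0 // mulr_ge0 // sqr_ge0.
by have := sqr_ge0 (f x - g x); rewrite !expr2; lra.
Qed.

Lemma L2m_scale c f : L2m f -> L2m (fun o => c * f o).
Proof.
move=> [mf if2]; split; first by apply: measurable_funM => //; exact: measurable_cst.
apply: (eqint (int_scale (c ^+ 2) if2)) => x.
by rewrite exprMn.
Qed.

Lemma L2m_mul f g : L2m f -> L2m g -> P.-integrable setT (fun o => (f o * g o)%:E).
Proof.
move=> [mf if2] [mg ig2].
apply: le_integrable (int_add if2 ig2) => //.
  by apply/measurable_EFinP; exact: measurable_funM.
move=> x _; rewrite !abse_EFin lee_fin.
rewrite [X in _ <= X]ger0_norm; last by rewrite addr_ge0 // sqr_ge0.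
have := sqr_ge0 (f x - g x); have := sqr_ge0 (f x + g x).
rewrite ler_norml !expr2 => h1 h2; apply/andP; split; nra.
Qed.

Lemma L2m_sum I (s : seq I) (F : I -> T -> R) :
  (forall i, L2m (F i)) -> L2m (fun o => \sum_(i <- s) F i o).
Proof.
move=> h; elim: s => [|a s IH].
  by have [m i] := L2m_cst 0; split;
    [apply: (eqmeas m) => x; rewrite big_nil
    |apply: (eqint i) => x; rewrite big_nil].
have [m i] := L2m_add (h a) IH; split.
  by apply: (eqmeas m) => x; rewrite big_cons.
by apply: (eqint i) => x; rewrite big_cons.
Qed.

Lemma FM_add k f g : FM k f -> FM k g -> FM k (fun o => f o + g o).
Proof. exact: measurable_funD. Qed.

Lemma FM_mul k f g : FM k f -> FM k g -> FM k (fun o => f o * g o).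
Proof. exact: measurable_funM. Qed.

Lemma FM_sum k I (s : seq I) (F : I -> T -> R) :
  (forall i, FM k (F i)) -> FM k (fun o => \sum_(i <- s) F i o).
Proof. exact: measurable_sum. Qed.

Definition FMV k p (Y : T -> 'cV[R]_p) := forall i, FM k (fun o => Y o i 0).
Definition L2V p (Y : T -> 'cV[R]_p) := forall i, L2m (fun o => Y o i 0).

Lemma qf_sum p (M : 'M[R]_p) v :
  qf M v = \sum_j \sum_i (M i j * (v i 0 * v j 0)).
Proof.
rewrite qfE mxE; apply: eq_bigr => j _; rewrite mxE mulr_suml.
by apply: eq_bigr => i _; rewrite !mxE; ring.
Qed.

Lemma bf_sum p (M : 'M[R]_p) a b :
  bf M a b = \sum_j \sum_i (M i j * (a i 0 * b j 0)).
Proof.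
rewrite /bf mxE; apply: eq_bigr => j _; rewrite mxE mulr_suml.
by apply: eq_bigr => i _; rewrite !mxE; ring.
Qed.

Lemma FMV_mul k q p (M : 'M[R]_(q, p)) Y : FMV k Y -> FMV k (fun o => M *m Y o).
Proof.
move=> h i.
have -> : (fun o => (M *m Y o) i 0) = (fun o => \sum_j (M i j * Y o j 0)).
  by apply/funext => o; rewrite mxE.
by apply: FM_sum => j; apply: FM_mul; [exact: FM_cst|exact: h].
Qed.

Lemma FMV_add k p (Y Z : T -> 'cV[R]_p) : FMV k Y -> FMV k Z -> FMV k (fun o => Y o + Z o).
Proof.
move=> h1 h2 i.
have -> : (fun o => (Y o + Z o) i 0) = (fun o => Y o i 0 + Z o i 0).
  by apply/funext => o; rewrite addE.
exact: FM_add.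
Qed.

Lemma FMV_mono k k' p (Y : T -> 'cV[R]_p) : (k <= k')%N -> FMV k Y -> FMV k' Y.
Proof. by move=> kk h i; exact: FM_mono (h i). Qed.

Lemma L2V_mul q p (M : 'M[R]_(q, p)) Y : L2V Y -> L2V (fun o => M *m Y o).
Proof.
move=> h i.
have -> : (fun o => (M *m Y o) i 0) = (fun o => \sum_j (M i j * Y o j 0)).
  by apply/funext => o; rewrite mxE.
by apply: L2m_sum => j; apply: L2m_scale.
Qed.

Lemma L2V_add p (Y Z : T -> 'cV[R]_p) : L2V Y -> L2V Z -> L2V (fun o => Y o + Z o).
Proof.
move=> h1 h2 i.
have -> : (fun o => (Y o + Z o) i 0) = (fun o => Y o i 0 + Z o i 0).
  by apply/funext => o; rewrite addE.
exact: L2m_add.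
Qed.

Lemma L2V_cst p (v : 'cV[R]_p) : L2V (fun _ => v).
Proof. by move=> i; exact: L2m_cst. Qed.

Lemma FMV_cst k p (v : 'cV[R]_p) : FMV k (fun _ => v).
Proof. by move=> i; exact: FM_cst. Qed.

Lemma FM_qf k p (M : 'M[R]_p) Y : FMV k Y -> FM k (fun o => qf M (Y o)).
Proof.
move=> h; have -> : (fun o => qf M (Y o)) =
    (fun o => \sum_j \sum_i (M i j * (Y o i 0 * Y o j 0))).
  by apply/funext => o; rewrite qf_sum.
apply: FM_sum => j; apply: FM_sum => i; apply: FM_mul; first exact: FM_cst.
by apply: FM_mul.
Qed.

Lemma FM_bf k p (M : 'M[R]_p) Y Z : FMV k Y -> FMV k Z -> FM k (fun o => bf M (Y o) (Z o)).
Proof.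
move=> h1 h2; have -> : (fun o => bf M (Y o) (Z o)) =
    (fun o => \sum_j \sum_i (M i j * (Y o i 0 * Z o j 0))).
  by apply/funext => o; rewrite bf_sum.
apply: FM_sum => j; apply: FM_sum => i; apply: FM_mul; first exact: FM_cst.
by apply: FM_mul.
Qed.

Lemma int_qf p (M : 'M[R]_p) Y : L2V Y -> P.-integrable setT (fun o => (qf M (Y o))%:E).
Proof.
move=> h; apply: (eqint (f := fun o => (\sum_j \sum_i (M i j * (Y o i 0 * Y o j 0)))%:E)); last first.
  by move=> o; rewrite qf_sum.
apply: int_sum => j; apply: int_sum => i; apply: int_scale; exact: L2m_mul.
Qed.

Lemma int_bf p (M : 'M[R]_p) Y Z : L2V Y -> L2V Z ->
  P.-integrable setT (fun o => (bf M (Y o) (Z o))%:E).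
Proof.
move=> h1 h2; apply: (eqint (f := fun o => (\sum_j \sum_i (M i j * (Y o i 0 * Z o j 0)))%:E)); last first.
  by move=> o; rewrite bf_sum.
apply: int_sum => j; apply: int_sum => i; apply: int_scale; exact: L2m_mul.
Qed.

Lemma int_w2 l h : FM l h -> (forall x, 0 <= h x) -> P.-integrable setT (fun o => (h o)%:E) ->
  P.-integrable setT (fun o => (h o * w l o ^+ 2)%:E).
Proof.
move=> mh h0 ih; have [mw _ _ _ _] := hw l.
apply/integrableP; split.
  apply/measurable_EFinP; apply: measurable_funM; first exact: FM_T mh.
  exact: measurable_funX.
rewrite (_ : (fun x => _) = (fun o => (h o * w l o ^+ 2)%:E)); last first.
  by apply/funext => x; rewrite abse_EFin ger0_norm // mulr_ge0 // sqr_ge0.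
rewrite E1 //; have /integrableP[_] := ih.
by rewrite (_ : (fun x => _) = (fun o => (h o)%:E)) //; apply/funext => x; rewrite abse_EFin ger0_norm.
Qed.

Lemma step l p (a b : T -> 'cV[R]_p) : FMV l a -> FMV l b -> L2V a -> L2V b ->
  FMV l.+1 (fun o => a o + w l o *: b o) /\ L2V (fun o => a o + w l o *: b o).
Proof.
move=> fa fb la lb.
have E i : (fun o => (a o + w l o *: b o) i 0) = (fun o => a o i 0 + w l o * b o i 0).
  by apply/funext => o; rewrite addE mxE.
have fm : FMV l.+1 (fun o => a o + w l o *: b o).
  move=> i; rewrite E; apply: FM_add; first exact: FM_mono (fa i).
  by apply: FM_mul; [exact: FM_w|exact: FM_mono (fb i)].
split => // i; split; first by apply: FM_T (fm i).
apply: (eqint (f := fun o => ((a o i 0 + w l o * b o i 0) ^+ 2)%:E)); last first.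
  by move=> o; rewrite addE mxE.
have [_ ia] := la i; have [_ ib] := lb i.
have fb2 : FM l (fun o => b o i 0 ^+ 2) by apply: FM_mul; exact: fb.
have := int_w2 fb2 (fun x => sqr_ge0 _) ib => ibw.
apply: le_integrable (int_add (int_scale 2 ia) (int_scale 2 ibw)) => //.
  apply/measurable_EFinP; apply: measurable_funX; rewrite -E; exact: FM_T (fm i).
move=> x _; rewrite !abse_EFin lee_fin ger0_norm ?sqr_ge0 // ger0_norm; last first.
  have := sqr_ge0 (a x i 0); have := sqr_ge0 (b x i 0 * w l x); rewrite exprMn; nra.
have := sqr_ge0 (a x i 0 - w l x * b x i 0); rewrite !expr2; nra.
Qed.

Lemma E3 l p (M : 'M[R]_p) (a b : T -> 'cV[R]_p) : psd M ->
  FMV l a -> FMV l b -> L2V a -> L2V b ->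
  (\int[P]_o (qf M (a o + w l o *: b o))%:E =
   \int[P]_o (qf M (a o))%:E + \int[P]_o (qf M (b o))%:E)%E.
Proof.
move=> [sM pM] fa fb la lb; have [mw _ _ _ _] := hw l.
have ptw o : qf M (a o + w l o *: b o) =
    (qf M (a o) + qf M (b o) * w l o ^+ 2) + (2 * bf M (a o) (b o)) * w l o.
  rewrite qf_add_sym // qf_scale bf_scaler; ring.
under eq_integral do rewrite ptw EFinD.
have fqb : FM l (fun o => qf M (b o)) by exact: FM_qf.
have iqa := int_qf M la; have iqb := int_qf M lb.
have iqbw := int_w2 fqb (fun o => pM (b o)) iqb.
have fg : FM l (fun o => 2 * bf M (a o) (b o)).
  by apply: FM_mul; [exact: FM_cst|exact: FM_bf].
have igw : P.-integrable setT (fun o => (2 * bf M (a o) (b o) * w l o)%:E).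
  apply: le_integrable (int_add iqa iqbw) => //.
    by apply/measurable_EFinP; apply: measurable_funM => //; exact: FM_T fg.
  move=> o _; rewrite !abse_EFin lee_fin [X in _ <= X]ger0_norm; last first.
    by rewrite addr_ge0 // mulr_ge0 // sqr_ge0.
  have h1 := pM (a o + w l o *: b o); have h2 := pM (a o + (- w l o) *: b o).
  move: h1 h2; rewrite !qf_add_sym // !qf_scale !bf_scaler sqrrN => h1 h2.
  rewrite ler_norml; apply/andP; split; nra.
rewrite integralD //; last exact: int_add.
rewrite E2 // adde0.
under eq_integral do rewrite EFinD.
rewrite ge0_integralD //.
- by rewrite E1.
- by move=> o _; rewrite lee_fin.
- by apply/measurable_EFinP; exact: FM_T (FM_qf _ fa).
- by move=> o _; rewrite lee_fin mulr_ge0 // sqr_ge0.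
- apply/measurable_EFinP; apply: measurable_funM; first exact: FM_T fqb.
  exact: measurable_funX.
Qed.


Section LQ.
Context (m N : nat) (A C : nat -> nat -> 'M[R]_n) (B D : nat -> nat -> 'M[R]_(n, m))
  (Q : nat -> nat -> 'M[R]_n) (Rm : nat -> nat -> 'M[R]_m) (G : nat -> 'M[R]_n).
Context (hQ : forall t k : nat, (t < N)%N -> (t <= k < N)%N -> psd (Q t k))
  (hR : forall t k : nat, (t < N)%N -> (t <= k < N)%N -> pd (Rm t k))
  (hG : forall t : nat, (t < N)%N -> psd (G t)).

Fixpoint Vrec (s : nat) (Phi : nat -> 'M[R]_(m, n)) (i : nat) : 'M[R]_n :=
  match i with
  | 0 => G s
  | i'.+1 => let l := (N - i'.+1)%N in
     Q s l + (Phi l)^T *m Rm s l *m Phi l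
     + (A s l + B s l *m Phi l)^T *m Vrec s Phi i' *m (A s l + B s l *m Phi l)
     + (C s l + D s l *m Phi l)^T *m Vrec s Phi i' *m (C s l + D s l *m Phi l)
  end.

Definition Vm s Phi l := Vrec s Phi (N - l).

Lemma Vm_N s Phi : Vm s Phi N = G s.
Proof. by rewrite /Vm subnn. Qed.

Lemma Vm_step s Phi l : (l < N)%N -> Vm s Phi l =
     Q s l + (Phi l)^T *m Rm s l *m Phi l
     + (A s l + B s l *m Phi l)^T *m Vm s Phi l.+1 *m (A s l + B s l *m Phi l)
     + (C s l + D s l *m Phi l)^T *m Vm s Phi l.+1 *m (C s l + D s l *m Phi l).
Proof.
move=> lN; rewrite /Vm.
have -> : (N - l = (N - l.+1).+1)%N by rewrite subnSK.
by rewrite /= subnSK // subKn // ltnW.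
Qed.

Lemma Vrec_psd s Phi : (s < N)%N -> forall i, (i <= N - s)%N -> psd (Vrec s Phi i).
Proof.
move=> sN; elim=> [|i IH] hi /=; first exact: hG.
have hl : (s <= N - i.+1 < N)%N.
  apply/andP; split; first lia.
  lia.
have hVi : psd (Vrec s Phi i) by apply: IH; lia.
apply: psd_add; last exact: psd_conj.
apply: psd_add; last exact: psd_conj.
apply: psd_add; first exact: hQ.
by apply: psd_conj; apply: pd_psd; exact: hR.
Qed.

Lemma Vm_psd s Phi l : (s < N)%N -> (s <= l <= N)%N -> psd (Vm s Phi l).
Proof. by move=> sN /andP[sl lN]; apply: Vrec_psd => //; lia. Qed.

Lemma Vrec_ext s Phi Psi i : (i <= N)%N ->
  (forall l, (N - i <= l < N)%N -> Phi l = Psi l) -> Vrec s Phi i = Vrec s Psi i.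
Proof.
elim: i => [//|i IH] hi h /=.
rewrite IH; last 2 first.
- lia.
- by move=> l /andP[h1 h2]; apply: h; apply/andP; split => //; lia.
by rewrite h //; apply/andP; split => //; lia.
Qed.


Definition Fgain s Phi : 'M[R]_(m, n) :=
  - invmx (Hm (Rm s s) (Vm s Phi s.+1) (B s s) (D s s))
    *m Km (Vm s Phi s.+1) (A s s) (C s s) (B s s) (D s s).

Lemma Fgain_ext s Phi Psi : (s < N)%N ->
  (forall l, (s < l < N)%N -> Phi l = Psi l) -> Fgain s Phi = Fgain s Psi.
Proof.
move=> sN h; rewrite /Fgain /Vm (@Vrec_ext s Phi Psi) //; first lia.
by move=> l /andP[h1 h2]; apply: h; apply/andP; split => //; lia.
Qed.

Lemma H_pd s Phi : (s < N)%N -> pd (Hm (Rm s s) (Vm s Phi s.+1) (B s s) (D s s)).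
Proof.
move=> sN; have hV : psd (Vm s Phi s.+1) by apply: Vm_psd => //; lia.
apply: pd_add_psd; last exact: psd_conj.
apply: pd_add_psd; last exact: psd_conj.
by apply: hR => //; lia.
Qed.

Lemma Fgain_eq s Phi : (s < N)%N ->
  Hm (Rm s s) (Vm s Phi s.+1) (B s s) (D s s) *m Fgain s Phi
  = - Km (Vm s Phi s.+1) (A s s) (C s s) (B s s) (D s s).
Proof.
move=> sN; rewrite /Fgain mulmxA mulmxN mulmxV ?mulNmx ?mul1mx //.
exact/pd_unit/H_pd.
Qed.

Lemma path_FL (Ac Cc : nat -> 'M[R]_n) (Bc Dc : nat -> 'M[R]_(n, m)) s y
  (c : nat -> 'cV[R]_n -> T -> 'cV[R]_m) (u0 : T -> 'cV[R]_m) (Phi : nat -> 'M[R]_(m, n)) :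
  FMV s y -> L2V y -> FMV s u0 -> L2V u0 ->
  (forall o, c s (y o) o = u0 o) ->
  (forall l z o, (s < l)%N -> c l z o = Phi l *m z) ->
  forall j, FMV (s + j) (Defs.path Ac Cc Bc Dc w s y c j) /\ L2V (Defs.path Ac Cc Bc Dc w s y c j).
Proof.
move=> fy ly fu lu hc0 hc; elim=> [|j [fX lX]]; first by rewrite addn0.
set X := Defs.path Ac Cc Bc Dc w s y c j.
pose cj o := c (s + j)%N (X o) o.
have [fc lc] : FMV (s + j) cj /\ L2V cj.
  case: j fX lX @X @cj => [|j] fX lX X cj.
    split; [apply: (FMV_mono (k := s)); first lia| ];
    by [move=> i; rewrite /cj /X /= addn0 (_ : (fun o => _) = (fun o => u0 o i 0)) //;
        apply/funext => o; rewrite hc0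
       |move=> i; rewrite /cj /X /= addn0 (_ : (fun o => _) = (fun o => u0 o i 0)) //;
        apply/funext => o; rewrite hc0].
  have -> : cj = (fun o => Phi (s + j.+1)%N *m X o).
    by apply/funext => o; rewrite /cj hc //; lia.
  by split; [exact: FMV_mul|exact: L2V_mul].
have := @step (s + j)%N n (fun o => Ac (s + j)%N *m X o + Bc (s + j)%N *m cj o)
  (fun o => Cc (s + j)%N *m X o + Dc (s + j)%N *m cj o).
rewrite addnS; apply.
- by apply: FMV_add; apply: FMV_mul.
- by apply: FMV_add; apply: FMV_mul.
- by apply: L2V_add; apply: L2V_mul.
- by apply: L2V_add; apply: L2V_mul.
Qed.


Lemma path_S (Ac Cc : nat -> 'M[R]_n) (Bc Dc : nat -> 'M[R]_(n, m)) s y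
  (c : nat -> 'cV[R]_n -> T -> 'cV[R]_m) j o :
  Defs.path Ac Cc Bc Dc w s y c j.+1 o =
  Ac (s + j)%N *m Defs.path Ac Cc Bc Dc w s y c j o
  + Bc (s + j)%N *m c (s + j)%N (Defs.path Ac Cc Bc Dc w s y c j o) o
  + w (s + j)%N o *: (Cc (s + j)%N *m Defs.path Ac Cc Bc Dc w s y c j o
     + Dc (s + j)%N *m c (s + j)%N (Defs.path Ac Cc Bc Dc w s y c j o) o).
Proof. by []. Qed.

Lemma qf_Vstep s Phi l x : (l < N)%N ->
  qf (Vm s Phi l) x = qf (Q s l) x + qf (Rm s l) (Phi l *m x)
    + qf (Vm s Phi l.+1) (A s l *m x + B s l *m (Phi l *m x))
    + qf (Vm s Phi l.+1) (C s l *m x + D s l *m (Phi l *m x)).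
Proof. by move=> lN; rewrite Vm_step // !qf_addM !qf_conj !mulmxDl !mulmxA. Qed.

Lemma tailE s Phi y c u0 : (s < N)%N -> FMV s y -> L2V y -> FMV s u0 -> L2V u0 ->
  (forall o, c s (y o) o = u0 o) ->
  (forall l z o, (s < l)%N -> c l z o = Phi l *m z) ->
  forall r, (r < N - s)%N ->
  ((\sum_((N - s - r)%N <= i < N - s)
     \int[P]_o (qf (Q s (s + i)%N) (Defs.path (A s) (C s) (B s) (D s) w s y c i o)
       + qf (Rm s (s + i)%N) (c (s + i)%N (Defs.path (A s) (C s) (B s) (D s) w s y c i o) o))%:E
   + \int[P]_o (qf (G s) (Defs.path (A s) (C s) (B s) (D s) w s y c (N - s)%N o))%:E)
  = \int[P]_o (qf (Vm s Phi (s + (N - s - r))%N)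
                (Defs.path (A s) (C s) (B s) (D s) w s y c (N - s - r)%N o))%:E)%E.
Proof.
move=> sN fy ly fu lu hc0 hc.
set X := Defs.path (A s) (C s) (B s) (D s) w s y c.
have hX := @path_FL (A s) (C s) (B s) (D s) s y c u0 Phi fy ly fu lu hc0 hc.
elim=> [|r IH] hr.
  rewrite subn0 big_geq // add0e subnKC ?Vm_N //; lia.
rewrite big_ltn; last lia.
have ej : ((N - s - r.+1).+1 = N - s - r)%N by lia.
rewrite -addeA ej IH; last lia.
rewrite -ej; set j := (N - s - r.+1)%N.
have j1 : (0 < j)%N by rewrite /j; lia.
have sjN : (s + j < N)%N by rewrite /j; lia.
have [fXj lXj] := hX j.
have hV : psd (Vm s Phi (s + j.+1)%N) by apply: Vm_psd => //; lia.
have E := @E3 (s + j)%N n (Vm s Phi (s + j.+1)%N)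
  (fun o => A s (s + j)%N *m X j o + B s (s + j)%N *m (Phi (s + j)%N *m X j o))
  (fun o => C s (s + j)%N *m X j o + D s (s + j)%N *m (Phi (s + j)%N *m X j o)) hV
  (FMV_add (FMV_mul _ fXj) (FMV_mul _ (FMV_mul _ fXj)))
  (FMV_add (FMV_mul _ fXj) (FMV_mul _ (FMV_mul _ fXj)))
  (L2V_add (L2V_mul _ lXj) (L2V_mul _ (L2V_mul _ lXj)))
  (L2V_add (L2V_mul _ lXj) (L2V_mul _ (L2V_mul _ lXj))).
cbv beta in E.
have hcj o : c (s + j)%N (X j o) o = Phi (s + j)%N *m X j o by apply: hc; lia.
have hVj : psd (Vm s Phi (s + j)%N) by apply: Vm_psd => //; lia.
set V' := Vm s Phi (s + j.+1)%N.
set a := fun o => A s (s + j)%N *m X j o + B s (s + j)%N *m (Phi (s + j)%N *m X j o).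
set b := fun o => C s (s + j)%N *m X j o + D s (s + j)%N *m (Phi (s + j)%N *m X j o).
have -> : (\int[P]_o (qf V' (X j.+1 o))%:E = \int[P]_o (qf V' (a o + w (s + j)%N o *: b o))%:E)%E.
  by apply: eq_integral => o _; rewrite /X path_S -/X hcj.
rewrite E.
have fa : FMV (s + j) a by apply: FMV_add; [exact: FMV_mul|apply: FMV_mul; exact: FMV_mul].
have fb : FMV (s + j) b by apply: FMV_add; [exact: FMV_mul|apply: FMV_mul; exact: FMV_mul].
have fPX : FMV (s + j) (fun o => Phi (s + j)%N *m X j o) by exact: FMV_mul.
have hQj : psd (Q s (s + j)%N) by apply: hQ => //; lia.
have hRj : psd (Rm s (s + j)%N) by apply: pd_psd; apply: hR => //; lia.
transitivity (\int[P]_o ((qf (Q s (s + j)%N) (X j o) + qf (Rm s (s + j)%N) (Phi (s + j)%N *m X j o))%:E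
   + (qf V' (a o))%:E + (qf V' (b o))%:E))%E; last first.
  by apply: eq_integral => o _; rewrite -!EFinD qf_Vstep // /V' addnS /a /b.
have m1 : measurable_fun setT (fun o => (qf (Q s (s + j)%N) (X j o)
     + qf (Rm s (s + j)%N) (Phi (s + j)%N *m X j o))%:E).
  apply/measurable_EFinP; apply: FM_T; apply: FM_add; [exact: FM_qf fXj|exact: FM_qf fPX].
have m2 : measurable_fun setT (fun o => (qf V' (a o))%:E).
  exact/measurable_EFinP/(FM_T (FM_qf _ fa)).
have m3 : measurable_fun setT (fun o => (qf V' (b o))%:E).
  exact/measurable_EFinP/(FM_T (FM_qf _ fb)).
have n1 : forall o, setT o -> (0 <= (qf (Q s (s + j)%N) (X j o)
     + qf (Rm s (s + j)%N) (Phi (s + j)%N *m X j o))%:E)%E.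
  by move=> o _; rewrite lee_fin addr_ge0 // qf_ge0.
have n2 : forall o, setT o -> (0 <= (qf V' (a o))%:E)%E.
  by move=> o _; rewrite lee_fin qf_ge0.
have n3 : forall o, setT o -> (0 <= (qf V' (b o))%:E)%E.
  by move=> o _; rewrite lee_fin qf_ge0.
have n12 : forall o, setT o -> (0 <= (qf (Q s (s + j)%N) (X j o)
     + qf (Rm s (s + j)%N) (Phi (s + j)%N *m X j o))%:E + (qf V' (a o))%:E)%E.
  by move=> o _; rewrite adde_ge0 // ?n1 ?n2.
rewrite [RHS](ge0_integralD P measurableT n12 (emeasurable_funD m1 m2) n3 m3).
rewrite [X in (_ = X + _)%E](ge0_integralD P measurableT n1 m1 n2 m2).
rewrite addeA; congr (_ + _ + _)%E.
by apply: eq_integral => o _; rewrite hcj.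
Qed.


Lemma sum_ord_nat (k : nat) (F : nat -> \bar R) :
  (\sum_(j < k) F j)%R = (\sum_(0 <= j < k) F j)%E.
Proof. by rewrite big_mkord. Qed.

Lemma Jcost_eq s Phi y c u0 : (s < N)%N -> FMV s y -> L2V y -> FMV s u0 -> L2V u0 ->
  (forall o, c s (y o) o = u0 o) ->
  (forall l z o, (s < l)%N -> c l z o = Phi l *m z) ->
  Jcost P N A C B D Q Rm G w s y c =
  (\int[P]_o (fc (Q s s) (Rm s s) (Vm s Phi s.+1) (A s s) (C s s) (B s s) (D s s)
     (y o) (u0 o))%:E)%E.
Proof.
move=> sN fy ly fu lu hc0 hc.
rewrite /Jcost.
rewrite (sum_ord_nat (N - s) (fun j => \int[P]_o (qf (Q s (s + j)%N)
  (Defs.path (A s) (C s) (B s) (D s) w s y c j o) + qf (Rm s (s + j)%N)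
  (c (s + j)%N (Defs.path (A s) (C s) (B s) (D s) w s y c j o) o))%:E)%E).
rewrite big_ltn; last lia.
rewrite -addeA.
have := @tailE s Phi y c u0 sN fy ly fu lu hc0 hc (N - s).-1 ltac:(lia).
rewrite (_ : (N - s - (N - s).-1)%N = 1%N); last lia.
move=> ->.
rewrite addn0 addn1.
set X := Defs.path (A s) (C s) (B s) (D s) w s y c.
have X0 o : X 0%N o = y o by [].
have hV : psd (Vm s Phi s.+1) by apply: Vm_psd => //; lia.
set a := fun o => A s s *m y o + B s s *m u0 o.
set b := fun o => C s s *m y o + D s s *m u0 o.
have fa : FMV s a by apply: FMV_add; exact: FMV_mul.
have fb : FMV s b by apply: FMV_add; exact: FMV_mul.
have la : L2V a by apply: L2V_add; exact: L2V_mul.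
have lb : L2V b by apply: L2V_add; exact: L2V_mul.
have -> : (\int[P]_o (qf (Vm s Phi s.+1) (X 1%N o))%:E
    = \int[P]_o (qf (Vm s Phi s.+1) (a o + w s o *: b o))%:E)%E.
  by apply: eq_integral => o _; rewrite /X path_S -/X addn0 X0 hc0.
rewrite (E3 hV fa fb la lb).
have -> : (\int[P]_o (qf (Q s s) (X 0%N o) + qf (Rm s s) (c s (X 0%N o) o))%:E
    = \int[P]_o (qf (Q s s) (y o) + qf (Rm s s) (u0 o))%:E)%E.
  by apply: eq_integral => o _; rewrite X0 hc0.
have hQs : psd (Q s s) by apply: hQ => //; lia.
have hRs : psd (Rm s s) by apply: pd_psd; apply: hR => //; lia.
have m1 : measurable_fun setT (fun o => (qf (Q s s) (y o) + qf (Rm s s) (u0 o))%:E).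
  apply/measurable_EFinP; apply: FM_T; apply: FM_add; [exact: FM_qf fy|exact: FM_qf fu].
have m2 : measurable_fun setT (fun o => (qf (Vm s Phi s.+1) (a o))%:E).
  exact/measurable_EFinP/(FM_T (FM_qf _ fa)).
have m3 : measurable_fun setT (fun o => (qf (Vm s Phi s.+1) (b o))%:E).
  exact/measurable_EFinP/(FM_T (FM_qf _ fb)).
have n1 : forall o, setT o -> (0 <= (qf (Q s s) (y o) + qf (Rm s s) (u0 o))%:E)%E.
  by move=> o _; rewrite lee_fin addr_ge0 // qf_ge0.
have n2 : forall o, setT o -> (0 <= (qf (Vm s Phi s.+1) (a o))%:E)%E.
  by move=> o _; rewrite lee_fin qf_ge0.
have n3 : forall o, setT o -> (0 <= (qf (Vm s Phi s.+1) (b o))%:E)%E.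
  by move=> o _; rewrite lee_fin qf_ge0.
have n12 : forall o, setT o -> (0 <= (qf (Q s s) (y o) + qf (Rm s s) (u0 o))%:E
    + (qf (Vm s Phi s.+1) (a o))%:E)%E.
  by move=> o _; rewrite adde_ge0 // ?n1 ?n2.
transitivity (\int[P]_o ((qf (Q s s) (y o) + qf (Rm s s) (u0 o))%:E
   + (qf (Vm s Phi s.+1) (a o))%:E + (qf (Vm s Phi s.+1) (b o))%:E))%E; last first.
  by apply: eq_integral => o _; rewrite -!EFinD.
rewrite [RHS](ge0_integralD P measurableT n12 (emeasurable_funD m1 m2) n3 m3).
rewrite [X in (_ = X + _)%E](ge0_integralD P measurableT n1 m1 n2 m2).
by rewrite addeA.
Qed.


Fixpoint Phi_rec (i : nat) : nat -> 'M[R]_(m, n) :=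
  match i with
  | 0 => fun _ => 0
  | i'.+1 => fun l => if l == (N - i'.+1)%N then Fgain l (Phi_rec i') else Phi_rec i' l
  end.

Definition PhiS := Phi_rec N.

Lemma Phi_rec_fix i : (i <= N)%N -> forall l, (N - i <= l < N)%N ->
  Phi_rec i l = Fgain l (Phi_rec i).
Proof.
elim: i => [|i IH] hi l /andP[h1 h2]; first lia.
have agree l' : l' != (N - i.+1)%N -> Phi_rec i.+1 l' = Phi_rec i l'.
  by move=> /negbTE h; rewrite /= h.
have ext l0 : (N - i.+1 <= l0 < N)%N -> Fgain l0 (Phi_rec i) = Fgain l0 (Phi_rec i.+1).
  move=> /andP[a b]; apply: Fgain_ext => // l' /andP[c e].
  by rewrite agree //; apply/eqP => E; lia.
case: (eqVneq l (N - i.+1)%N) => [E|ne].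
  rewrite {1}E /= eqxx E ext //; lia.
rewrite agree // IH //; first (apply: ext; lia); lia.
Qed.

Lemma PhiS_fix l : (l < N)%N -> PhiS l = Fgain l PhiS.
Proof. by move=> lN; apply: Phi_rec_fix => //; rewrite subnn. Qed.

Lemma FM_Fmeas k f : FM k f -> Fmeas x0 w k f.
Proof. by move=> h Y mY; have := h measurableT Y mY; rewrite setTI. Qed.

Lemma mx_col_eq p q (M1 M2 : 'M[R]_(p, q)) : (forall x : 'cV[R]_q, M1 *m x = M2 *m x) -> M1 = M2.
Proof.
move=> h; apply/matrixP => i j.
have := congr1 (fun X : 'cV[R]_p => X i 0) (h (delta_mx j 0)).
by rewrite -!colE !mxE.
Qed.

Lemma fc_ge0 s Phi y v : (s < N)%N ->
  0 <= fc (Q s s) (Rm s s) (Vm s Phi s.+1) (A s s) (C s s) (B s s) (D s s) y v.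
Proof.
move=> sN; have hV : psd (Vm s Phi s.+1) by apply: Vm_psd => //; lia.
have hQs : psd (Q s s) by apply: hQ => //; lia.
have hRs : psd (Rm s s) by apply: pd_psd; apply: hR => //; lia.
by rewrite /fc !addr_ge0 // qf_ge0.
Qed.

Lemma fc_meas s Phi k y v : FMV k y -> FMV k v ->
  measurable_fun setT (fun o =>
    (fc (Q s s) (Rm s s) (Vm s Phi s.+1) (A s s) (C s s) (B s s) (D s s) (y o) (v o))%:E).
Proof.
move=> fy fv; apply/measurable_EFinP; apply: FM_T; rewrite /fc.
apply: FM_add; first apply: FM_add; first apply: FM_add.
- exact: FM_qf.
- exact: FM_qf.
- by apply: FM_qf; apply: FMV_add; exact: FMV_mul.
- by apply: FM_qf; apply: FMV_add; exact: FMV_mul.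
Qed.

Lemma fc_min s Phi y v : (s < N)%N ->
  fc (Q s s) (Rm s s) (Vm s Phi s.+1) (A s s) (C s s) (B s s) (D s s) y v =
  fc (Q s s) (Rm s s) (Vm s Phi s.+1) (A s s) (C s s) (B s s) (D s s) y (Fgain s Phi *m y)
  + qf (Hm (Rm s s) (Vm s Phi s.+1) (B s s) (D s s)) (v - Fgain s Phi *m y).
Proof.
move=> sN; apply: complete_sq; last exact: Fgain_eq.
- by have [] := hR sN (_ : (s <= s < N)%N); [rewrite leqnn|].
- by have [] := @Vm_psd s Phi s.+1 sN ltac:(apply/andP; split; lia).
Qed.


Lemma L2F_FMV k (u : T -> 'cV[R]_m) : L2F_k P x0 w k u -> FMV k u /\ L2V u.
Proof.
move=> [fu lu]; have fu' : FMV k u by move=> i; apply: FmeasE; exact: fu.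
by split => // i; split; [exact: FM_T (fu' i)|exact: lu].
Qed.

Lemma exist_eq : equilibrium P N x0 w A C B D Q Rm G PhiS.
Proof.
move=> t x tN k /andP[tk kN] u hu; cbv zeta.
set Xs := Defs.path _ _ _ _ _ _ _ _ (k - t)%N.
have [fu lu] := L2F_FMV hu.
have [fX lX] : FMV k Xs /\ L2V Xs.
  have := @path_FL (fun l => A l l) (fun l => C l l) (fun l => B l l) (fun l => D l l)
    t (fun _ => x) (fun l z _ => PhiS l *m z) (fun _ => PhiS t *m x) PhiS
    (FMV_cst _) (L2V_cst _) (FMV_cst _) (L2V_cst _) (fun _ => erefl) (fun _ _ _ _ => erefl)
    (k - t)%N.
  by rewrite subnKC.
rewrite (@Jcost_eq k PhiS Xs _ (fun o => PhiS k *m Xs o)) //; last 2 first.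
- exact: FMV_mul.
- exact: L2V_mul.
rewrite (@Jcost_eq k PhiS Xs _ u) //; last 2 first.
- by move=> o; rewrite eqxx.
- by move=> l z o kl; rewrite gtn_eqF.
apply: ge0_le_integral => //.
- by move=> o _; rewrite lee_fin fc_ge0.
- by apply: fc_meas; [exact: fX|exact: FMV_mul].
- exact: fc_meas.
move=> o _; rewrite lee_fin (fc_min _ _ (u o)) // -PhiS_fix //.
by rewrite lerDl qf_ge0 //; apply: pd_psd; exact: H_pd.
Qed.

Lemma int_const (f : T -> R) c : (forall o, f o = c) -> (\int[P]_o (f o)%:E = c%:E)%E.
Proof.
move=> h; transitivity (c%:E * P setT)%E.
  rewrite -(integral_cst P measurableT c%:E).
  by apply: eq_integral => o _; rewrite h.
by rewrite probability_setT mule1.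
Qed.

Lemma uniq_fix Psi : equilibrium P N x0 w A C B D Q Rm G Psi ->
  forall s, (s < N)%N -> Psi s = Fgain s Psi.
Proof.
move=> hE s sN; apply: mx_col_eq => x.
set F := Fgain s Psi.
have hu : L2F_k P x0 w s (fun _ => F *m x).
  split; first by move=> i; apply: FM_Fmeas; exact: FM_cst.
  by move=> i; exact: int_cst.
have ss : (s <= s < N)%N by rewrite leqnn sN.
have := hE s x sN s ss (fun _ => F *m x) hu.
cbv zeta; rewrite subnn.
change (Defs.path _ _ _ _ _ _ _ _ 0) with (fun _ : T => x).
rewrite (@Jcost_eq s Psi (fun _ => x) _ (fun _ => Psi s *m x) sN (FMV_cst _) (L2V_cst _)
  (FMV_cst _) (L2V_cst _) (fun _ => erefl) (fun _ _ _ _ => erefl)).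
rewrite (@Jcost_eq s Psi (fun _ => x) _ (fun _ => F *m x) sN (FMV_cst _) (L2V_cst _)
  (FMV_cst _) (L2V_cst _)); last 2 first.
- by move=> o; rewrite eqxx.
- by move=> l z o kl; rewrite gtn_eqF.
set fcs := fc (Q s s) (Rm s s) (Vm s Psi s.+1) (A s s) (C s s) (B s s) (D s s).
rewrite (int_const (c := fcs x (Psi s *m x))) // (int_const (c := fcs x (F *m x))) //.
rewrite /fcs.
rewrite lee_fin (fc_min _ _ (Psi s *m x)) // -/F gerDl.
have [_ hH] := H_pd Psi sN.
move=> h; apply/eqP; rewrite -subr_eq0; apply/negPn/negP => ne.
by have := hH _ ne; rewrite ltNge h.
Qed.

Lemma uniq_all Psi : equilibrium P N x0 w A C B D Q Rm G Psi ->
  forall l, (l < N)%N -> Psi l = PhiS l.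
Proof.
move=> hE.
suff H : forall r, (r <= N)%N -> forall l, (N - r <= l < N)%N -> Psi l = PhiS l.
  by move=> l lN; apply: (H N) => //; rewrite subnn.
elim=> [|r IH] hr l /andP[h1 h2]; first lia.
case: (eqVneq l (N - r.+1)%N) => [E|ne]; last by apply: IH; lia.
rewrite (uniq_fix hE) // PhiS_fix //; apply: Fgain_ext => // l' /andP[a b].
by apply: IH; lia.
Qed.

End LQ.
End Main.

Unset Implicit Arguments.

Theorem corollary3p1 (d : measure_display) (T : measurableType d) (R : realType)
  (P : probability T R) (n m N : nat)
  (x0 : T -> 'cV[R]_n) (w : nat -> T -> R)
  (A C : nat -> nat -> 'M[R]_n) (B D : nat -> nat -> 'M[R]_(n, m))
  (Q : nat -> nat -> 'M[R]_n) (Rm : nat -> nat -> 'M[R]_m) (G : nat -> 'M[R]_n) :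
  (0 < N)%N ->
  (forall i : 'I_n, measurable_fun setT (fun o => x0 o i 0)) ->
  mds P x0 w ->
  (forall t k : nat, (t < N)%N -> (t <= k < N)%N -> psd (Q t k)) ->
  (forall t k : nat, (t < N)%N -> (t <= k < N)%N -> pd (Rm t k)) ->
  (forall t : nat, (t < N)%N -> psd (G t)) ->
  exists Phi : nat -> 'M[R]_(m, n),
    equilibrium P N x0 w A C B D Q Rm G Phi /\
    forall Psi : nat -> 'M[R]_(m, n),
      equilibrium P N x0 w A C B D Q Rm G Psi ->
      forall t : nat, (t < N)%N -> Psi t = Phi t.
Proof.
move=> N0 hx0 hw hQ hR hG.
exists (PhiS N A C B D Q Rm G); split.
  exact: (exist_eq hx0 hw A C B D hQ hR hG).
move=> Psi hPsi t tN.
exact: (uniq_all hx0 hw hQ hR hG hPsi tN).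
Qed.
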